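(* (1) Let $M$ be a $\mathtt{dCBN}$ term. If $M^n\to N$ in $\mathtt{dBang}$, then there is a $\mathtt{dCBN}$ term $P$ such that $M\to_n^* P$ and $N\to^* P^n$. (2) Let $M$ be a $\mathtt{dCBV}$ term. If $M^v\to N$ in $\mathtt{dBang}$, then there is a $\mathtt{dCBV}$ term $P$ such that $M\to_v^* P$ and $N\to^* P^v$.
   Context: \textbf{dBang.} Terms: $M,N ::= x \mid \lambda x.M \mid MN \mid M[N/x] \mid\ !M \mid \mathrm{der}\,M$ ($M[N/x]$ explicit substitution binding $x$); $M\{N/x\}$ capture-avoiding substitution. List contexts $L ::= \square\mid L[N/x]$. Root rules: $L\langle\lambda x.M\rangle N \mapsto L\langle M[N/x]\rangle$; $M[L\langle !N\rangle/x]\mapsto L\langle M\{N/x\}\rangle$; $\mathrm{der}(L\langle !N\rangle)\mapsto L\langle N\rangle$; $\to$ is their closure under all contexts. \textbf{dCBN, dCBV.} Common syntax $M,N::=x\mid\lambda x.M\mid MN\mid M[N/x]$; values $V::=x\mid\lambda x.M$; list contexts $L::=\square\mid L[N/x]$. $\to_n$ is the closure under all contexts of $L\langle\lambda x.M\rangle N\mapsto L\langle M[N/x]\rangle$ and $M[N/x]\mapsto M\{N/x\}$. $\to_v$ is the closure under all contexts of $L\langle\lambda x.M\rangle N\mapsto L\langle M[N/x]\rangle$ and $M[L\langle V\rangle/x]\mapsto L\langle M\{V/x\}\rangle$ for $V$ a value. \textbf{Translations.} $x^n=x$, $(\lambda x.M)^n=\lambda x.M^n$, $(MN)^n=M^n\,!N^n$,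 $(M[N/x])^n=M^n[!N^n/x]$. $x^v=!x$, $(\lambda x.M)^v=!(\lambda x.M^v)$, $(MN)^v=L\langle P\rangle N^v$ if $M^v=L\langle !P\rangle$ for a list context $L$, and $(MN)^v=\mathrm{der}(M^v)\,N^v$ otherwise; $(M[N/x])^v=M^v[N^v/x]$. *)

(* Defs.v *)
(* Terms are represented with de Bruijn indices (terms up to
   alpha-equivalence); capture-avoiding substitution is de Bruijn substitution. *)
From Stdlib Require Import Arith List Relations.
Import ListNotations.

(* BEs M N  represents  M[N/x]  : the binder x (index 0) scopes over M only. *)
Inductive bterm : Type :=
| BVar : nat -> bterm
| BLam : bterm -> bterm
| BApp : bterm -> bterm -> bterm
| BEs  : bterm -> bterm -> bterm
| BBang : bterm -> bterm
| BDer : bterm -> bterm.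

Fixpoint liftB (c k : nat) (t : bterm) : bterm :=
  match t with
  | BVar n => if n <? c then BVar n else BVar (n + k)
  | BLam M => BLam (liftB (S c) k M)
  | BApp M N => BApp (liftB c k M) (liftB c k N)
  | BEs M N => BEs (liftB (S c) k M) (liftB c k N)
  | BBang M => BBang (liftB c k M)
  | BDer M => BDer (liftB c k M)
  end.

(* substB j u t : replace index j by u in t (capture-avoiding), decrementing
   indices above j.  M{N/x} with x = index 0 is substB 0 N M. *)
Fixpoint substB (j : nat) (u : bterm) (t : bterm) : bterm :=
  match t with
  | BVar n => if n <? j then BVar n
              else if n =? j then liftB 0 j u
              else BVar (n - 1)
  | BLam M => BLam (substB (S j) u M)
  | BApp M N => BApp (substB j u M) (substB j u N)
  | BEs M N => BEs (substB (S j) u M) (substB j u N)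
  | BBang M => BBang (substB j u M)
  | BDer M => BDer (substB j u M)
  end.

(* List contexts L ::= [] | L[N/x], represented as the list of the N's,
   innermost first: plugB [N1; ...; Nk] M = M[N1/x1]...[Nk/xk]. *)
Fixpoint plugB (L : list bterm) (M : bterm) : bterm :=
  match L with
  | [] => M
  | N :: L' => plugB L' (BEs M N)
  end.

(* Root rules (the Barendregt convention of the paper is implemented by
   shifting the term moved under the binders of L). *)
Inductive rootB : bterm -> bterm -> Prop :=
| rootB_dB : forall L M N,
    rootB (BApp (plugB L (BLam M)) N) (plugB L (BEs M (liftB 0 (length L) N)))
| rootB_sbang : forall M L N,
    rootB (BEs M (plugB L (BBang N))) (plugB L (substB 0 N (liftB 1 (length L) M)))
| rootB_dbang : forall L N,
    rootB (BDer (plugB L (BBang N))) (plugB L N).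

Inductive stepB : bterm -> bterm -> Prop :=
| stepB_root : forall M N, rootB M N -> stepB M N
| stepB_lam : forall M M', stepB M M' -> stepB (BLam M) (BLam M')
| stepB_appl : forall M M' N, stepB M M' -> stepB (BApp M N) (BApp M' N)
| stepB_appr : forall M N N', stepB N N' -> stepB (BApp M N) (BApp M N')
| stepB_esl : forall M M' N, stepB M M' -> stepB (BEs M N) (BEs M' N)
| stepB_esr : forall M N N', stepB N N' -> stepB (BEs M N) (BEs M N')
| stepB_bang : forall M M', stepB M M' -> stepB (BBang M) (BBang M')
| stepB_der : forall M M', stepB M M' -> stepB (BDer M) (BDer M').

Inductive lterm : Type :=
| LVar : nat -> lterm
| LLam : lterm -> lterm
| LApp : lterm -> lterm -> lterm
| LEs  : lterm -> lterm -> lterm.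

Fixpoint liftL (c k : nat) (t : lterm) : lterm :=
  match t with
  | LVar n => if n <? c then LVar n else LVar (n + k)
  | LLam M => LLam (liftL (S c) k M)
  | LApp M N => LApp (liftL c k M) (liftL c k N)
  | LEs M N => LEs (liftL (S c) k M) (liftL c k N)
  end.

Fixpoint substL (j : nat) (u : lterm) (t : lterm) : lterm :=
  match t with
  | LVar n => if n <? j then LVar n
              else if n =? j then liftL 0 j u
              else LVar (n - 1)
  | LLam M => LLam (substL (S j) u M)
  | LApp M N => LApp (substL j u M) (substL j u N)
  | LEs M N => LEs (substL (S j) u M) (substL j u N)
  end.

Fixpoint plugL (L : list lterm) (M : lterm) : lterm :=
  match L with
  | [] => M
  | N :: L' => plugL L' (LEs M N)
  end.

Definition is_value (V : lterm) : Prop :=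
  match V with LVar _ | LLam _ => True | _ => False end.

Inductive rootN : lterm -> lterm -> Prop :=
| rootN_dB : forall L M N,
    rootN (LApp (plugL L (LLam M)) N) (plugL L (LEs M (liftL 0 (length L) N)))
| rootN_s : forall M N, rootN (LEs M N) (substL 0 N M).

Inductive rootV : lterm -> lterm -> Prop :=
| rootV_dB : forall L M N,
    rootV (LApp (plugL L (LLam M)) N) (plugL L (LEs M (liftL 0 (length L) N)))
| rootV_sv : forall M L V, is_value V ->
    rootV (LEs M (plugL L V)) (plugL L (substL 0 V (liftL 1 (length L) M))).

Inductive ctxL (r : lterm -> lterm -> Prop) : lterm -> lterm -> Prop :=
| ctxL_root : forall M N, r M N -> ctxL r M N
| ctxL_lam : forall M M', ctxL r M M' -> ctxL r (LLam M) (LLam M')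
| ctxL_appl : forall M M' N, ctxL r M M' -> ctxL r (LApp M N) (LApp M' N)
| ctxL_appr : forall M N N', ctxL r N N' -> ctxL r (LApp M N) (LApp M N')
| ctxL_esl : forall M M' N, ctxL r M M' -> ctxL r (LEs M N) (LEs M' N)
| ctxL_esr : forall M N N', ctxL r N N' -> ctxL r (LEs M N) (LEs M N').

Definition stepN := ctxL rootN.
Definition stepV := ctxL rootV.

Fixpoint transN (M : lterm) : bterm :=
  match M with
  | LVar n => BVar n
  | LLam M => BLam (transN M)
  | LApp M N => BApp (transN M) (BBang (transN N))
  | LEs M N => BEs (transN M) (BBang (transN N))
  end.

(* unbang T = Some (L<P>) if T = L<!P> for a list context L, None otherwise *)
Fixpoint unbang (T : bterm) : option bterm :=
  match T with
  | BBang P => Some P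
  | BEs M N => match unbang M with Some M' => Some (BEs M' N) | None => None end
  | _ => None
  end.

Fixpoint transV (M : lterm) : bterm :=
  match M with
  | LVar n => BBang (BVar n)
  | LLam M => BBang (BLam (transV M))
  | LApp M N =>
      match unbang (transV M) with
      | Some Q => BApp Q (transV N)
      | None => BApp (BDer (transV M)) (transV N)
      end
  | LEs M N => BEs (transV M) (transV N)
  end.

Definition stepsB := clos_refl_trans bterm stepB.
Definition stepsN := clos_refl_trans lterm stepN.
Definition stepsV := clos_refl_trans lterm stepV.

(* Main.v *)
Require Import Defs.
From Stdlib Require Import Arith List Relations Lia.
Import ListNotations.

Lemma rootB_app_inv X Y Z : rootB (BApp X Y) Z ->
  exists L M, X = plugB L (BLam M) /\ Z = plugB L (BEs M (liftB 0 (length L) Y)).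
Proof. intros H; inversion H; subst; eauto. Qed.
Lemma rootB_es_inv X Y Z : rootB (BEs X Y) Z ->
  exists L N, Y = plugB L (BBang N) /\ Z = plugB L (substB 0 N (liftB 1 (length L) X)).
Proof. intros H; inversion H; subst; eauto. Qed.
Lemma rootB_der_inv X Z : rootB (BDer X) Z ->
  exists L N, X = plugB L (BBang N) /\ Z = plugB L N.
Proof. intros H; inversion H; subst; eauto. Qed.
Lemma rootB_var_inv n Z : rootB (BVar n) Z -> False.
Proof. intros H; inversion H. Qed.
Lemma rootB_lam_inv X Z : rootB (BLam X) Z -> False.
Proof. intros H; inversion H. Qed.
Lemma rootB_bang_inv X Z : rootB (BBang X) Z -> False.
Proof. intros H; inversion H. Qed.

Lemma stepB_app_inv X Y Z : stepB (BApp X Y) Z ->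
  rootB (BApp X Y) Z \/ (exists X', stepB X X' /\ Z = BApp X' Y)
  \/ (exists Y', stepB Y Y' /\ Z = BApp X Y').
Proof. intros H; inversion H; subst; eauto 10. Qed.
Lemma stepB_es_inv X Y Z : stepB (BEs X Y) Z ->
  rootB (BEs X Y) Z \/ (exists X', stepB X X' /\ Z = BEs X' Y)
  \/ (exists Y', stepB Y Y' /\ Z = BEs X Y').
Proof. intros H; inversion H; subst; eauto 10. Qed.
Lemma stepB_der_inv X Z : stepB (BDer X) Z ->
  rootB (BDer X) Z \/ (exists X', stepB X X' /\ Z = BDer X').
Proof. intros H; inversion H; subst; eauto 10. Qed.
Lemma stepB_lam_inv X Z : stepB (BLam X) Z -> exists X', stepB X X' /\ Z = BLam X'.
Proof. intros H; inversion H; subst; eauto. exfalso; eapply rootB_lam_inv; eauto. Qed.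
Lemma stepB_bang_inv X Z : stepB (BBang X) Z -> exists X', stepB X X' /\ Z = BBang X'.
Proof. intros H; inversion H; subst; eauto. exfalso; eapply rootB_bang_inv; eauto. Qed.
Lemma stepB_var_inv n Z : stepB (BVar n) Z -> False.
Proof. intros H; inversion H; subst. eapply rootB_var_inv; eauto. Qed.

Lemma stepsB_cong (f : bterm -> bterm) :
  (forall x y, stepB x y -> stepB (f x) (f y)) ->
  forall x y, stepsB x y -> stepsB (f x) (f y).
Proof.
  intros Hf x y H; induction H.
  - apply rt_step; auto.
  - apply rt_refl.
  - eapply rt_trans; eauto.
Qed.
Lemma stepsL_cong r (f : lterm -> lterm) :
  (forall x y, ctxL r x y -> ctxL r (f x) (f y)) ->
  forall x y, clos_refl_trans lterm (ctxL r) x y ->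
  clos_refl_trans lterm (ctxL r) (f x) (f y).
Proof.
  intros Hf x y H; induction H.
  - apply rt_step; auto.
  - apply rt_refl.
  - eapply rt_trans; eauto.
Qed.

Lemma plugB_app L x M : plugB (L ++ [x]) M = BEs (plugB L M) x.
Proof. revert M; induction L; simpl; auto. Qed.
Lemma plugL_app L x M : plugL (L ++ [x]) M = LEs (plugL L M) x.
Proof. revert M; induction L; simpl; auto. Qed.

Lemma plugB_bang_bang L N P : plugB L (BBang N) = BBang P -> L = [] /\ N = P.
Proof.
  destruct L as [|x L] using rev_ind; simpl.
  - intros H; inversion H; auto.
  - rewrite plugB_app; discriminate.
Qed.

Lemma liftB_0 T : forall c, liftB c 0 T = T.
Proof.
  induction T; intros c; simpl; rewrite ?IHT, ?IHT1, ?IHT2, ?Nat.add_0_r; auto.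
  destruct (n <? c); auto.
Qed.

Lemma transN_lift M : forall c k, transN (liftL c k M) = liftB c k (transN M).
Proof.
  induction M; intros c k; simpl; try (rewrite ?IHM, ?IHM1, ?IHM2; reflexivity).
  destruct (n <? c); auto.
Qed.

Lemma transN_subst M : forall j B, transN (substL j B M) = substB j (transN B) (transN M).
Proof.
  induction M; intros j B; simpl; try (rewrite ?IHM, ?IHM1, ?IHM2; reflexivity).
  destruct (n <? j); auto. destruct (n =? j); simpl; auto; apply transN_lift.
Qed.

Lemma transN_plug L M : transN (plugL L M) = plugB (map (fun x => BBang (transN x)) L) (transN M).
Proof. revert M; induction L; simpl; intros; auto. Qed.

Lemma transN_plug_lam L : forall A M', transN A = plugB L (BLam M') ->
  exists L' A0, A = plugL L' (LLam A0) /\ L = map (fun x => BBang (transN x)) L' /\ M' = transN A0.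
Proof.
  induction L as [|x L IH] using rev_ind; intros A M' H; simpl in H.
  - destruct A; simpl in H; try discriminate. inversion H; subst.
    exists [], A; auto.
  - rewrite plugB_app in H. destruct A; simpl in H; try discriminate.
    inversion H; subst. destruct (IH _ _ H1) as (L' & A0 & -> & -> & ->).
    exists (L' ++ [A2]), A0. rewrite plugL_app, map_app; auto.
Qed.

Lemma simN : forall M N, stepB (transN M) N -> exists P, stepN M P /\ N = transN P.
Proof.
  induction M; intros N H; simpl in H.
  - exfalso; eapply stepB_var_inv; eauto.
  - apply stepB_lam_inv in H as (X' & H & ->).
    destruct (IHM _ H) as (P & HP & ->). exists (LLam P); split; [apply ctxL_lam; auto|auto].
  - apply stepB_app_inv in H as [H|[(X'&H&->)|(Y'&H&->)]].
    + apply rootB_app_inv in H as (L & M' & HL & ->).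
      apply transN_plug_lam in HL as (L' & A0 & -> & -> & ->).
      exists (plugL L' (LEs A0 (liftL 0 (length L') M2))). split.
      * apply ctxL_root. apply rootN_dB.
      * rewrite transN_plug; simpl. rewrite transN_lift, length_map; auto.
    + destruct (IHM1 _ H) as (P & HP & ->). exists (LApp P M2); split; [apply ctxL_appl; auto|auto].
    + apply stepB_bang_inv in H as (X' & H & ->).
      destruct (IHM2 _ H) as (P & HP & ->). exists (LApp M1 P); split; [apply ctxL_appr; auto|auto].
  - apply stepB_es_inv in H as [H|[(X'&H&->)|(Y'&H&->)]].
    + apply rootB_es_inv in H as (L & N0 & HL & ->).
      symmetry in HL; apply plugB_bang_bang in HL as [-> ->]. simpl.
      exists (substL 0 M2 M1). split.
      * apply ctxL_root; apply rootN_s.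
      * rewrite liftB_0, transN_subst; auto.
    + destruct (IHM1 _ H) as (P & HP & ->). exists (LEs P M2); split; [apply ctxL_esl; auto|auto].
    + apply stepB_bang_inv in H as (X' & H & ->).
      destruct (IHM2 _ H) as (P & HP & ->). exists (LEs M1 P); split; [apply ctxL_esr; auto|auto].
Qed.

Definition omap (f : bterm -> bterm) (o : option bterm) :=
  match o with Some x => Some (f x) | None => None end.

Lemma unbang_lift T : forall c k, unbang (liftB c k T) = omap (liftB c k) (unbang T).
Proof.
  induction T; intros c k; simpl; auto.
  - destruct (n <? c); auto.
  - rewrite IHT1. destruct (unbang T1); auto.
Qed.

Lemma unbang_subst_some T : forall j u Q, unbang T = Some Q ->
  unbang (substB j u T) = Some (substB j u Q).
Proof.
  induction T; intros j u Q H; simpl in H; try discriminate.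
  - destruct (unbang T1) eqn:E; try discriminate. inversion H; subst.
    simpl. rewrite (IHT1 (S j) u b eq_refl); auto.
  - inversion H; auto.
Qed.

Lemma unbang_plug L : forall Z, unbang (plugB L Z) = omap (plugB L) (unbang Z).
Proof.
  induction L; intros Z; simpl. destruct (unbang Z); auto.
  rewrite IHL; simpl. destruct (unbang Z); auto.
Qed.

Lemma unbang_char T Q : unbang T = Some Q -> exists L P, T = plugB L (BBang P) /\ Q = plugB L P.
Proof.
  revert Q; induction T; intros Q H; simpl in H; try discriminate.
  - destruct (unbang T1) eqn:E; try discriminate. inversion H; subst.
    destruct (IHT1 _ eq_refl) as (L & P & -> & ->).
    exists (L ++ [T2]), P. rewrite !plugB_app; auto.
  - inversion H; subst. eexists [], _; split; reflexivity.
Qed.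

Lemma unbang_der T Q : unbang T = Some Q -> stepB (BDer T) Q.
Proof.
  intros H; apply unbang_char in H as (L & P & -> & ->).
  apply stepB_root, rootB_dbang.
Qed.

Lemma unbang_fwd T : forall Q T', unbang T = Some Q -> stepB T T' ->
  exists Q', unbang T' = Some Q' /\ stepB Q Q'.
Proof.
  induction T; intros Q T' H HS; simpl in H; try discriminate.
  - destruct (unbang T1) eqn:E; try discriminate. inversion H; subst.
    apply stepB_es_inv in HS as [HS|[(X'&HS&->)|(Y'&HS&->)]].
    + apply rootB_es_inv in HS as (L & N & -> & ->).
      exists (plugB L (substB 0 N (liftB 1 (length L) b))). split.
      * rewrite unbang_plug. erewrite unbang_subst_some; [reflexivity|].
        rewrite unbang_lift, E; reflexivity.
      * apply stepB_root, rootB_sbang.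
    + destruct (IHT1 _ _ eq_refl HS) as (Q' & HQ & HS').
      exists (BEs Q' T2); simpl; rewrite HQ; split; auto. apply stepB_esl; auto.
    + exists (BEs b Y'); simpl; rewrite E; split; auto. apply stepB_esr; auto.
  - inversion H; subst. apply stepB_bang_inv in HS as (X' & HS & ->).
    exists X'; auto.
Qed.

Lemma unbang_bwd T : forall Q Q', unbang T = Some Q -> stepB Q Q' ->
  exists T', stepB T T' /\ unbang T' = Some Q'.
Proof.
  induction T; intros Q Q' H HS; simpl in H; try discriminate.
  - destruct (unbang T1) eqn:E; try discriminate. inversion H; subst.
    apply stepB_es_inv in HS as [HS|[(X'&HS&->)|(Y'&HS&->)]].
    + apply rootB_es_inv in HS as (L & N & -> & ->).
      exists (plugB L (substB 0 N (liftB 1 (length L) T1))). split.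
      * apply stepB_root, rootB_sbang.
      * rewrite unbang_plug. erewrite unbang_subst_some; [reflexivity|].
        rewrite unbang_lift, E; reflexivity.
    + destruct (IHT1 _ _ eq_refl HS) as (T' & HS' & HQ).
      exists (BEs T' T2); simpl; rewrite HQ; split; auto. apply stepB_esl; auto.
    + exists (BEs T1 Y'); simpl; rewrite E; split; auto. apply stepB_esr; auto.
  - inversion H; subst. exists (BBang Q'); split; auto. apply stepB_bang; auto.
Qed.

Lemma unbang_fwds T T' : stepsB T T' -> forall Q, unbang T = Some Q ->
  exists Q', unbang T' = Some Q' /\ stepsB Q Q'.
Proof.
  intros H; induction H; intros Q HQ.
  - destruct (unbang_fwd _ _ _ HQ H) as (Q' & ? & ?). exists Q'; split; auto. apply rt_step; auto.
  - exists Q; split; auto. apply rt_refl.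
  - destruct (IHclos_refl_trans1 _ HQ) as (Q1 & H1 & S1).
    destruct (IHclos_refl_trans2 _ H1) as (Q2 & H2 & S2).
    exists Q2; split; auto. eapply rt_trans; eauto.
Qed.

Lemma transV_lift M : forall c k, transV (liftL c k M) = liftB c k (transV M).
Proof.
  induction M; intros c k; simpl.
  - destruct (n <? c); auto.
  - rewrite IHM; auto.
  - rewrite IHM1, IHM2, unbang_lift. destruct (unbang (transV M1)); auto.
  - rewrite IHM1, IHM2; auto.
Qed.

Lemma unbang_substV M : forall j W,
  unbang (substB j W (transV M)) = omap (substB j W) (unbang (transV M)).
Proof.
  induction M; intros j W; simpl; auto.
  - destruct (unbang (transV M1)); auto.
  - rewrite IHM1. destruct (unbang (transV M1)); auto.
Qed.

Lemma transV_subst M : forall j V W, transV V = BBang W ->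
  transV (substL j V M) = substB j W (transV M).
Proof.
  induction M; intros j V W HV; simpl.
  - destruct (n <? j); auto. destruct (n =? j); simpl; auto.
    rewrite transV_lift, HV; auto.
  - rewrite (IHM _ _ _ HV); auto.
  - rewrite (IHM1 _ _ _ HV), (IHM2 _ _ _ HV), unbang_substV.
    destruct (unbang (transV M1)); auto.
  - rewrite (IHM1 _ _ _ HV), (IHM2 _ _ _ HV); auto.
Qed.

Lemma transV_plug L M : transV (plugL L M) = plugB (map transV L) (transV M).
Proof. revert M; induction L; simpl; intros; auto. Qed.

Lemma transV_plug_bang L : forall B N, transV B = plugB L (BBang N) ->
  exists L' V, B = plugL L' V /\ L = map transV L' /\ transV V = BBang N /\ is_value V.
Proof.
  induction L as [|x L IH] using rev_ind; intros B N H; simpl in H.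
  - exists [], B. destruct B; simpl in H |- *.
    + repeat split; auto.
    + repeat split; auto.
    + destruct (unbang (transV B1)); discriminate.
    + discriminate.
  - rewrite plugB_app in H. destruct B; simpl in H; try discriminate.
    + destruct (unbang (transV B1)); discriminate.
    + inversion H; subst. destruct (IH _ _ H1) as (L' & V & -> & -> & HV & HVv).
      exists (L' ++ [B2]), V. rewrite plugL_app, map_app; auto.
Qed.

Lemma transV_unbang_lam L : forall A M', unbang (transV A) = Some (plugB L (BLam M')) ->
  exists L' A0, A = plugL L' (LLam A0) /\ L = map transV L' /\ M' = transV A0.
Proof.
  induction L as [|x L IH] using rev_ind; intros A M' H; simpl in H.
  - destruct A; simpl in H; try discriminate.
    + inversion H; subst. exists [], A; auto.
    + destruct (unbang (transV A1)); discriminate.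
    + destruct (unbang (transV A1)); discriminate.
  - rewrite plugB_app in H. destruct A; simpl in H; try discriminate.
    + destruct (unbang (transV A1)); discriminate.
    + destruct (unbang (transV A1)) eqn:E; try discriminate.
      inversion H; subst. destruct (IH _ _ E) as (L' & A0 & -> & -> & ->).
      exists (L' ++ [A2]), A0. rewrite plugL_app, map_app; auto.
Qed.

Lemma plugB_der L X Y : plugB L X = BDer Y -> L = [].
Proof.
  destruct L as [|x L] using rev_ind; auto. rewrite plugB_app; discriminate.
Qed.

Lemma simV : forall M N, stepB (transV M) N -> exists P, stepsV M P /\ stepsB N (transV P).
Proof.
  induction M; intros N H; simpl in H.
  - apply stepB_bang_inv in H as (X' & H & ->). exfalso; eapply stepB_var_inv; eauto.
  - apply stepB_bang_inv in H as (X' & H & ->).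
    apply stepB_lam_inv in H as (X'' & H & ->).
    destruct (IHM _ H) as (P & HP & HS). exists (LLam P); split.
    + apply (stepsL_cong _ LLam); auto. intros; apply ctxL_lam; auto.
    + simpl. apply (stepsB_cong (fun x => BBang (BLam x))); auto.
      intros; apply stepB_bang, stepB_lam; auto.
  - destruct (unbang (transV M1)) as [Q|] eqn:E.
    + apply stepB_app_inv in H as [H|[(X'&H&->)|(Y'&H&->)]].
      * apply rootB_app_inv in H as (L & M' & HL & ->). subst Q.
        apply transV_unbang_lam in E as (L' & A0 & -> & -> & ->).
        exists (plugL L' (LEs A0 (liftL 0 (length L') M2))). split.
        -- apply rt_step, ctxL_root, rootV_dB.
        -- rewrite transV_plug; simpl. rewrite transV_lift, length_map. apply rt_refl.
      * destruct (unbang_bwd _ _ _ E H) as (T' & HT & HU).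
        destruct (IHM1 _ HT) as (P & HP & HS).
        destruct (unbang_fwds _ _ HS _ HU) as (Q'' & HU' & HS').
        exists (LApp P M2); split.
        -- apply (stepsL_cong _ (fun x => LApp x M2)); auto. intros; apply ctxL_appl; auto.
        -- simpl. rewrite HU'. apply (stepsB_cong (fun x => BApp x (transV M2))); auto.
           intros; apply stepB_appl; auto.
      * destruct (IHM2 _ H) as (P & HP & HS). exists (LApp M1 P); split.
        -- apply (stepsL_cong _ (fun x => LApp M1 x)); auto. intros; apply ctxL_appr; auto.
        -- simpl. rewrite E. apply (stepsB_cong (fun x => BApp Q x)); auto.
           intros; apply stepB_appr; auto.
    + apply stepB_app_inv in H as [H|[(X'&H&->)|(Y'&H&->)]].
      * apply rootB_app_inv in H as (L & M' & HL & ->).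
        symmetry in HL; apply plugB_der in HL as Hn. subst L. discriminate.
      * apply stepB_der_inv in H as [H|(X''&H&->)].
        -- apply rootB_der_inv in H as (L & N0 & HL & ->).
           rewrite HL, unbang_plug in E. discriminate.
        -- destruct (IHM1 _ H) as (P & HP & HS).
           exists (LApp P M2); split.
           ++ apply (stepsL_cong _ (fun x => LApp x M2)); auto. intros; apply ctxL_appl; auto.
           ++ eapply rt_trans.
              ** apply (stepsB_cong (fun x => BApp (BDer x) (transV M2))); [|exact HS].
                 intros; apply stepB_appl, stepB_der; auto.
              ** simpl. destruct (unbang (transV P)) eqn:E'.
                 --- apply rt_step, stepB_appl, unbang_der; auto.
                 --- apply rt_refl.
      * destruct (IHM2 _ H) as (P & HP & HS). exists (LApp M1 P); split.
        -- apply (stepsL_cong _ (fun x => LApp M1 x)); auto. intros; apply ctxL_appr; auto.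
        -- simpl. rewrite E. apply (stepsB_cong (fun x => BApp (BDer (transV M1)) x)); auto.
           intros; apply stepB_appr; auto.
  - apply stepB_es_inv in H as [H|[(X'&H&->)|(Y'&H&->)]].
    + apply rootB_es_inv in H as (L & N0 & HL & ->).
      apply transV_plug_bang in HL as (L' & V & -> & -> & HV & HVv).
      exists (plugL L' (substL 0 V (liftL 1 (length L') M1))). split.
      * apply rt_step, ctxL_root, rootV_sv; auto.
      * rewrite transV_plug, (transV_subst _ _ _ _ HV), transV_lift, length_map. apply rt_refl.
    + destruct (IHM1 _ H) as (P & HP & HS). exists (LEs P M2); split.
      * apply (stepsL_cong _ (fun x => LEs x M2)); auto. intros; apply ctxL_esl; auto.
      * simpl. apply (stepsB_cong (fun x => BEs x (transV M2))); auto.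
        intros; apply stepB_esl; auto.
    + destruct (IHM2 _ H) as (P & HP & HS). exists (LEs M1 P); split.
      * apply (stepsL_cong _ (fun x => LEs M1 x)); auto. intros; apply ctxL_esr; auto.
      * simpl. apply (stepsB_cong (fun x => BEs (transV M1) x)); auto.
        intros; apply stepB_esr; auto.
Qed.

Theorem mainTheorem7 :
  (forall (M : lterm) (N : bterm), stepB (transN M) N ->
     exists P : lterm, stepsN M P /\ stepsB N (transN P)) /\
  (forall (M : lterm) (N : bterm), stepB (transV M) N ->
     exists P : lterm, stepsV M P /\ stepsB N (transV P)).
Proof.
  split.
  - intros M N H. destruct (simN _ _ H) as (P & HP & ->).
    exists P; split; [apply rt_step; exact HP | apply rt_refl].
  - exact simV.
Qed.
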